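(* Let $\mathcal{I}$ be an instance of SNSAT with $|\mathcal{I}|=n$, and let $\mathcal{K}_\mathcal{I}$ and $\psi_n$ be the Kripke structure and formula associated with $\mathcal{I}$ as described in the context. Then $v_\mathcal{I}(x_n)=\top$ if and only if $\mathcal{K}_\mathcal{I}\models[B]\bot\to\psi_n$, i.e., every initial track of $\mathcal{K}_\mathcal{I}$ satisfies $[B]\bot\to\psi_n$.
   Context: SNSAT: an instance $\mathcal{I}$ consists of Boolean variables $X=\{x_1,\dots,x_n\}$ and propositional formulas $F_1(Z_1),F_2(x_1,Z_2),\dots,F_n(x_1,\dots,x_{n-1},Z_n)$, where $F_i$ uses variables among $x_1,\dots,x_{i-1}$ and $Z_i=\{z_i^1,\dots,z_i^{j_i}\}$, the sets $Z_i$ being pairwise disjoint and disjoint from $X$; $|\mathcal{I}|=n$. The valuation $v_\mathcal{I}$ of $X$ is defined by $v_\mathcal{I}(x_i)=\top$ iff $F_i(v_\mathcal{I}(x_1),\dots,v_\mathcal{I}(x_{i-1}),Z_i)$ is satisfiable. Kripke structures, tracks and semantics: a finite Kripke structure $(\mathcal{AP},W,\delta,\mu,w_0)$ has left-total $\delta\subseteq W\times W$, labelling $\mu:W\to2^{\mathcal{AP}}$ and initial state $w_0$; a track is a nonempty finite sequence of states consecutive in $\delta$; it is initial if its first state is $w_0$; $\mathrm{fst},\mathrm{lst}$ are its first/last state. Formulas use proposition letters, $\neg,\wedge$ (other connectives as abbreviations), $\top,\bot$, $\langle A\rangle$, $\langle B\rangle$, $[B]\psi=\neg\langle B\rangle\neg\psi$.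 $\rho\models p$ iff $p\in\mu(w)$ for all states $w$ of $\rho$; $\rho\models\langle A\rangle\psi$ iff some track $\rho'$ with $\mathrm{fst}(\rho')=\mathrm{lst}(\rho)$ satisfies $\psi$; $\rho\models\langle B\rangle\psi$ iff some proper prefix $\rho(1,i)$, $1\le i<|\rho|$, satisfies $\psi$. $\mathcal{K}\models\psi$ iff all initial tracks satisfy $\psi$. The $F_i$ are read as formulas over proposition letters $X\cup Z$. Construction: let $Z=\bigcup_iZ_i$, $R=\{r_1,\dots,r_n\}$, $R_i=R\setminus\{r_i\}$. $\mathcal{K}_\mathcal{I}$ has proposition letters $X\cup Z\cup\{s,t\}\cup R\cup\{p_{\overline{x_i}}:1\le i\le n\}$ and distinct states $s_0$ and, for each $i$, $w_{x_i},\overline{w_{x_i}},\overline{s_i}$, and $w_{z_i^u},\overline{w_{z_i^u}}$ for $1\le u\le j_i$. Labels: $\mu(w_{x_i})=X\cup Z\cup\{s,t\}\cup R_i$; $\mu(\overline{w_{x_i}})=(X\setminus\{x_i\})\cup Z\cup\{s,t\}\cup R_i\cup\{p_{\overline{x_i}}\}$; $\mu(w_{z_i^u})=X\cup Z\cup\{s,t\}\cup R_i$; $\mu(\overline{w_{z_i^u}})=X\cup(Z\setminus\{z_i^u\})\cup\{s,t\}\cup R_i$; $\mu(\overline{s_i})=X\cup Z\cup\{t\}\cup R_i$; $\mu(s_0)=X\cup Z\cup\{s\}\cup R$. Call $L_i^0=\{w_{x_i},\overline{w_{x_i}}\}$ and $L_i^u=\{w_{z_i^u},\overline{w_{z_i^u}}\}$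 for $1\le u\le j_i$. Transitions: $\overline{w_{x_i}}\to\overline{s_i}\to w_{x_i}$; every state of $L_i^{u}$ has an edge to both states of $L_i^{u+1}$ for $0\le u<j_i$; every state of $L_i^{j_i}$ has an edge to both states of $L_{i-1}^0$ if $i\ge2$, and to $s_0$ if $i=1$; $s_0\to s_0$. The initial state is $w_{x_n}$. Formulas: $\ell_{=2}=\langle B\rangle\top\wedge[B][B]\bot$; $\psi_0=\bot$ and for $k\ge1$, $\psi_k=\langle A\rangle\varphi_k$ with $\varphi_k=(s\wedge\neg t)\wedge\bigwedge_{i=1}^n\big((x_i\wedge\neg r_i)\to F_i(x_1,\dots,x_{i-1},Z_i)\big)\wedge[B]\Big(\big(\bigvee_{i=1}^n\langle A\rangle p_{\overline{x_i}}\big)\to\langle A\rangle\big(\neg s\wedge\ell_{=2}\wedge\langle A\rangle(\ell_{=2}\wedge\neg\psi_{k-1})\big)\Big)$. *)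

(* Defs.v *)
From Stdlib Require Import Arith List.
Import ListNotations.

(* Variables: X k is x_k ; Zv i u is z_i^u. *)
Inductive pvar : Type := X (k : nat) | Zv (i u : nat).

Inductive pform : Type :=
| PVar (v : pvar)
| PTop | PBot
| PNot (f : pform)
| PAnd (f g : pform)
| POr (f g : pform).

Fixpoint peval (a : pvar -> Prop) (f : pform) : Prop :=
  match f with
  | PVar v => a v
  | PTop => True
  | PBot => False
  | PNot g => ~ peval a g
  | PAnd g h => peval a g /\ peval a h
  | POr g h => peval a g \/ peval a h
  end.

Fixpoint pvars_ok (P : pvar -> Prop) (f : pform) : Prop :=
  match f with
  | PVar v => P v
  | PTop | PBot => True
  | PNot g => pvars_ok P g
  | PAnd g h | POr g h => pvars_ok P g /\ pvars_ok P h
  end.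

(* An SNSAT instance: size n, |Z_i| = j i, formulas F i (for 1 <= i <= n). *)
Record snsat : Type := { nI : nat; jI : nat -> nat; FI : nat -> pform }.

Definition snsat_wf (I : snsat) : Prop :=
  forall i, 1 <= i <= nI I ->
    pvars_ok (fun v => match v with
                       | X k => 1 <= k < i
                       | Zv i' u => i' = i /\ 1 <= u <= jI I i
                       end) (FI I i).

Definition sat_with (F : pform) (rho : nat -> Prop) : Prop :=
  exists z : nat -> nat -> bool,
    peval (fun v => match v with X k => rho k | Zv i u => z i u = true end) F.

(* vupto I m k = v_I(x_k) for 1 <= k <= m. *)
Fixpoint vupto (I : snsat) (m : nat) : nat -> Prop :=
  match m with
  | 0 => fun _ => False
  | S m' => fun k => if k <=? m' then vupto I m' k
                     else sat_with (FI I (S m')) (vupto I m')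
  end.

Definition vI (I : snsat) (i : nat) : Prop := vupto I i i.

Record kripke : Type := {
  KW : Type;
  KAP : Type;
  Kdelta : KW -> KW -> Prop;
  Kmu : KW -> KAP -> Prop;
  Kw0 : KW }.

Fixpoint consec {W} (d : W -> W -> Prop) (l : list W) : Prop :=
  match l with
  | x :: ((y :: _) as t) => d x y /\ consec d t
  | _ => True
  end.

Definition is_track (K : kripke) (rho : list (KW K)) : Prop :=
  rho <> [] /\ consec (Kdelta K) rho.

Fixpoint lst_opt {W} (l : list W) : option W :=
  match l with
  | [] => None
  | [x] => Some x
  | _ :: t => lst_opt t
  end.

Inductive hs (AP : Type) : Type :=
| HAtom (p : AP)
| HTop | HBot
| HNot (f : hs AP)
| HAnd (f g : hs AP)
| HA (f : hs AP)
| HB (f : hs AP).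
Arguments HAtom {AP}. Arguments HTop {AP}. Arguments HBot {AP}.
Arguments HNot {AP}. Arguments HAnd {AP}. Arguments HA {AP}. Arguments HB {AP}.

Definition HOr {AP} (f g : hs AP) : hs AP := HNot (HAnd (HNot f) (HNot g)).
Definition HImp {AP} (f g : hs AP) : hs AP := HNot (HAnd f (HNot g)).
Definition HBoxB {AP} (f : hs AP) : hs AP := HNot (HB (HNot f)).

Fixpoint hsat (K : kripke) (rho : list (KW K)) (f : hs (KAP K)) : Prop :=
  match f with
  | HAtom p => forall w, In w rho -> Kmu K w p
  | HTop => True
  | HBot => False
  | HNot g => ~ hsat K rho g
  | HAnd g h => hsat K rho g /\ hsat K rho h
  | HA g => exists rho', is_track K rho' /\ hd_error rho' = lst_opt rho
                         /\ hsat K rho' g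
  | HB g => exists i, 1 <= i < length rho /\ hsat K (firstn i rho) g
  end.

Definition kmodels (K : kripke) (f : hs (KAP K)) : Prop :=
  forall rho, is_track K rho -> hd_error rho = Some (Kw0 K) -> hsat K rho f.

(* Proposition letters: x_k, z_i^u, s, t, r_k, p_{bar x_k}. *)
Inductive ap : Type :=
| AX (k : nat) | AZ (i u : nat) | As | At | AR (k : nat) | APx (k : nat).

(* Raw states: s0, w_{x_i}, bar w_{x_i}, bar s_i, w_{z_i^u}, bar w_{z_i^u}. *)
Inductive rstate : Type :=
| S0
| Wx (i : nat) | Wxb (i : nat) | Sb (i : nat)
| Wz (i u : nat) | Wzb (i u : nat).

Section Construction.
Variable I : snsat.

Definition inrange (i : nat) : Prop := 1 <= i <= nI I.
Definition inZ (i u : nat) : Prop := inrange i /\ 1 <= u <= jI I i.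

Definition valid (w : rstate) : Prop :=
  match w with
  | S0 => True
  | Wx i | Wxb i | Sb i => inrange i
  | Wz i u | Wzb i u => inZ i u
  end.

Definition base_lab (i : nat) (p : ap) : Prop :=
  match p with
  | AX k => inrange k
  | AZ i' u => inZ i' u
  | As | At => True
  | AR k => inrange k /\ k <> i
  | APx _ => False
  end.

Definition rmu (w : rstate) (p : ap) : Prop :=
  match w with
  | Wx i => base_lab i p
  | Wxb i => (base_lab i p /\ p <> AX i) \/ p = APx i
  | Wz i u => base_lab i p
  | Wzb i u => base_lab i p /\ p <> AZ i u
  | Sb i => base_lab i p /\ p <> As
  | S0 => match p with
          | AX k => inrange k
          | AZ i' u => inZ i' u
          | As => True
          | At => False
          | AR k => inrange k
          | APx _ => False
          end
  end.

Definition inL (i u : nat) (w : rstate) : Prop :=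
  match u with
  | 0 => w = Wx i \/ w = Wxb i
  | _ => w = Wz i u \/ w = Wzb i u
  end.

Definition rdelta (w w' : rstate) : Prop :=
  (exists i, inrange i /\ w = Wxb i /\ w' = Sb i)
  \/ (exists i, inrange i /\ w = Sb i /\ w' = Wx i)
  \/ (exists i u, inrange i /\ u < jI I i /\ inL i u w /\ inL i (S u) w')
  \/ (exists i, inrange i /\ 2 <= i /\ inL i (jI I i) w /\ inL (i - 1) 0 w')
  \/ (inrange 1 /\ inL 1 (jI I 1) w /\ w' = S0)
  \/ (w = S0 /\ w' = S0).

Definition stateK : Type := { w : rstate | valid w }.

End Construction.

Definition KI (I : snsat) (hn : 1 <= nI I) : kripke :=
  {| KW := stateK I;
     KAP := ap;
     Kdelta := fun a b => rdelta I (proj1_sig a) (proj1_sig b);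
     Kmu := fun a p => rmu I (proj1_sig a) p;
     Kw0 := exist (valid I) (Wx (nI I)) (conj hn (le_n (nI I))) |}.

Fixpoint ptr (f : pform) : hs ap :=
  match f with
  | PVar (X k) => HAtom (AX k)
  | PVar (Zv i u) => HAtom (AZ i u)
  | PTop => HTop
  | PBot => HBot
  | PNot g => HNot (ptr g)
  | PAnd g h => HAnd (ptr g) (ptr h)
  | POr g h => HOr (ptr g) (ptr h)
  end.

Definition bigAnd (l : list (hs ap)) : hs ap := fold_right HAnd HTop l.
Definition bigOr (l : list (hs ap)) : hs ap := fold_right HOr HBot l.

Definition len2 : hs ap := HAnd (HB HTop) (HBoxB (HBoxB HBot)).

Fixpoint psi (I : snsat) (k : nat) : hs ap :=
  match k with
  | 0 => HBot
  | S k' =>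
    HA (HAnd (HAnd (HAtom As) (HNot (HAtom At)))
        (HAnd (bigAnd (map (fun i => HImp (HAnd (HAtom (AX i)) (HNot (HAtom (AR i))))
                                          (ptr (FI I i)))
                           (seq 1 (nI I))))
              (HBoxB (HImp (bigOr (map (fun i => HA (HAtom (APx i))) (seq 1 (nI I))))
                           (HA (HAnd (HNot (HAtom As))
                                     (HAnd len2 (HA (HAnd len2 (HNot (psi I k')))))))))))
  end.

(* Main.v *)
Require Import Defs.
From Stdlib Require Import Arith List Lia Classical ClassicalEpsilon ProofIrrelevance.
Import ListNotations.

Lemma consec_map {A B} (d : B -> B -> Prop) (f : A -> B) l :
  consec d (map f l) <-> consec (fun a b => d (f a) (f b)) l.
Proof. induction l as [|a [|b t] IH]; simpl; tauto. Qed.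

Lemma consec_tail {A} (d : A -> A -> Prop) x l : consec d (x :: l) -> consec d l.
Proof. destruct l; simpl; tauto. Qed.

Lemma lst_opt_in {A} (l : list A) x : lst_opt l = Some x -> In x l.
Proof. induction l as [|a [|b t] IH]; simpl; try discriminate.
  - intros H; inversion H; auto.
  - intros H; right; apply IH; exact H. Qed.

Lemma lst_opt_snoc {A} (a : list A) x : lst_opt (a ++ [x]) = Some x.
Proof. induction a as [|y a IH]; simpl; auto. destruct (a ++ [x]) eqn:E.
  - destruct a; discriminate.
  - exact IH. Qed.

Lemma lst_opt_map {A B} (f : A -> B) l : lst_opt (map f l) = option_map f (lst_opt l).
Proof. induction l as [|a [|b t] IH]; simpl; auto. Qed.

Lemma hd_error_map {A B} (f : A -> B) l : hd_error (map f l) = option_map f (hd_error l).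
Proof. destruct l; reflexivity. Qed.

Lemma in_firstn {A} n (l : list A) x : In x (firstn n l) -> In x l.
Proof. intros H. rewrite <- (firstn_skipn n l). apply in_or_app; auto. Qed.

Lemma peval_congr (P : pvar -> Prop) (a b : pvar -> Prop) f :
  pvars_ok P f -> (forall v, P v -> (a v <-> b v)) -> (peval a f <-> peval b f).
Proof. induction f; simpl; intros Hok H; try tauto.
  all: try (apply H; auto).
  all: try (rewrite IHf; tauto).
  all: rewrite IHf1, IHf2; tauto. Qed.

Lemma vI_S J i : vI J (S i) <-> sat_with (FI J (S i)) (vupto J i).
Proof. assert (Hf : (S i <=? i) = false) by (apply Nat.leb_gt; lia).
  unfold vI; simpl; simpl in Hf; rewrite Hf; tauto. Qed.

Lemma vupto_stable J m k : k <= m -> (vupto J m k <-> vI J k).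
Proof. induction m; intros Hk.
  - assert (k = 0) by lia; subst; unfold vI; simpl; tauto.
  - simpl. destruct (Nat.leb_spec k m).
    + apply IHm; lia.
    + assert (k = S m) by lia; subst. rewrite vI_S; tauto. Qed.


Definition lev (w : rstate) : nat :=
  match w with S0 => 0 | Wx i | Wxb i | Sb i => i | Wz i _ | Wzb i _ => i end.
Definition isx (w : rstate) : Prop := match w with Wx _ | Wxb _ => True | _ => False end.
Definition isSb (w : rstate) : Prop := match w with Sb _ => True | _ => False end.

Section Sec.
Variable J : snsat.

Lemma rmu_AX w k : rmu J w (AX k) <-> inrange J k /\ w <> Wxb k.
Proof. destruct w; simpl; split; intuition (try congruence). Qed.

Lemma rmu_AZ w i u : rmu J w (AZ i u) <-> inZ J i u /\ w <> Wzb i u.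
Proof. destruct w; simpl; split; intuition (try congruence). Qed.

Lemma rmu_AR w k : rmu J w (AR k) <-> inrange J k /\ (w = S0 \/ lev w <> k).
Proof. destruct w; simpl; split; intuition (try congruence). Qed.

Lemma rmu_As w : rmu J w As <-> ~ isSb w.
Proof. destruct w; simpl; split; intuition (try congruence). Qed.

Lemma rmu_At w : rmu J w At <-> w <> S0.
Proof. destruct w; simpl; split; intuition (try congruence). Qed.

Lemma rmu_APx w k : rmu J w (APx k) <-> w = Wxb k.
Proof. destruct w; simpl; split; intuition (try congruence). Qed.

Lemma inL_lev i u w : inL i u w -> lev w = i.
Proof. destruct u; simpl; intros [-> | ->]; reflexivity. Qed.

Lemma inL_isx i u w : inL i u w -> (isx w <-> u = 0) /\ w <> S0 /\ ~ isSb w.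
Proof. destruct u; simpl; intros [-> | ->]; simpl; intuition (try congruence). Qed.

Lemma edge_lev w w' : rdelta J w w' -> ~ isSb w -> ~ isSb w' ->
  (lev w' = lev w /\ ~ isx w' /\ w' <> S0)
  \/ (S (lev w') = lev w /\ (isx w' \/ w' = S0))
  \/ (w = S0 /\ w' = S0).
Proof.
  intros H Hw Hw'.
  destruct H as [[i [_ [-> ->]]] | [[i [_ [-> ->]]] | [[i [u [_ [_ [H1 H2]]]]] | [[i [_ [H0 [H1 H2]]]] | [[_ [H1 ->]] | [-> ->]]]]]].
  - simpl in Hw'; tauto.
  - simpl in Hw; tauto.
  - left. apply inL_lev in H1 as E1. pose proof (inL_lev _ _ _ H2) as E2.
    apply inL_isx in H2. rewrite E1, E2. intuition discriminate.
  - right; left. apply inL_lev in H1 as E1. pose proof (inL_lev _ _ _ H2) as E2.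
    apply inL_isx in H2. rewrite E1, E2. split; [lia|]. left; tauto.
  - right; left. apply inL_lev in H1 as E1. rewrite E1. simpl. auto.
  - right; right; auto.
Qed.

Lemma edge_S0 w' : rdelta J S0 w' -> w' = S0.
Proof.
  intros H.
  destruct H as [[i [_ [? _]]] | [[i [_ [? _]]] | [[i [u [_ [_ [H1 H2]]]]] | [[i [_ [H0 [H1 H2]]]] | [[_ [H1 ->]] | [_ ->]]]]]];
  try discriminate; auto.
  all: apply inL_isx in H1; tauto.
Qed.

Lemma all_S0 b : consec (rdelta J) (S0 :: b) -> forall y, In y b -> y = S0.
Proof. induction b as [|c b IH]; simpl; [tauto|].
  intros [H1 H2] y Hy. apply edge_S0 in H1. subst c.
  destruct Hy as [<- | Hy]; auto. Qed.

Lemma after_S0 a b : consec (rdelta J) (a ++ S0 :: b) -> forall y, In y b -> y = S0.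
Proof. induction a as [|x a IH]; simpl.
  - apply all_S0.
  - intros H; apply IH. exact (consec_tail _ _ _ H). Qed.

Lemma xtail w t : consec (rdelta J) (w :: t) -> (forall y, In y (w :: t) -> ~ isSb y) ->
  forall y, In y t -> lev y <= lev w /\ (isx y -> lev y < lev w).
Proof.
  revert w; induction t as [|w' t IH]; intros w Hc Hs y Hy; [destruct Hy|].
  destruct Hc as [He Hc].
  assert (E := edge_lev _ _ He (Hs w (or_introl eq_refl)) (Hs w' (or_intror (or_introl eq_refl)))).
  assert (A : lev w' <= lev w /\ (isx w' -> lev w' < lev w)).
  { destruct E as [[E1 [E2 _]] | [[E1 _] | [-> ->]]]; simpl; split; try lia; intros; try lia; tauto. }
  destruct Hy as [<- | Hy]; auto.
  assert (B := IH w' Hc (fun z Hz => Hs z (or_intror Hz)) y Hy).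
  destruct A, B; split; [lia|]. intros; specialize (H2 H3); lia.
Qed.

Lemma passing w t y i : consec (rdelta J) (w :: t) -> (forall z, In z (w :: t) -> ~ isSb z) ->
  In y (w :: t) -> 1 <= i -> lev y <= i -> i < lev w ->
  exists z, In z t /\ isx z /\ lev z = i.
Proof.
  revert w; induction t as [|w' t IH]; intros w Hc Hs Hy H1 H2 H3.
  - destruct Hy as [<- | []]; lia.
  - destruct Hc as [He Hc].
    assert (E := edge_lev _ _ He (Hs w (or_introl eq_refl)) (Hs w' (or_intror (or_introl eq_refl)))).
    destruct Hy as [<- | Hy]; [lia|].
    destruct E as [[E1 _] | [[E1 E2] | [-> ->]]].
    + destruct (IH w' Hc (fun z Hz => Hs z (or_intror Hz)) Hy H1 H2 ltac:(lia)) as [z [? ?]].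
      exists z; simpl; auto.
    + destruct (Nat.eq_dec i (lev w')) as [Ei | Ei].
      * destruct E2 as [E2 | ->]; [|simpl in Ei; lia].
        exists w'; simpl; auto.
      * destruct (IH w' Hc (fun z Hz => Hs z (or_intror Hz)) Hy H1 H2 ltac:(lia)) as [z [? ?]].
        exists z; simpl; auto.
    + simpl in H3; lia.
Qed.

End Sec.

Section Sec2.
Variable J : snsat.
Variable hn : 1 <= nI J.
Notation K := (KI J hn).
Notation st := (stateK J).
Notation pr := (@proj1_sig rstate (valid J)).

Lemma pr_inj (a b : st) : pr a = pr b -> a = b.
Proof. destruct a, b; simpl; intros ->; f_equal; apply proof_irrelevance. Qed.

Lemma is_track_iff (rho : list st) : is_track K rho <-> rho <> [] /\ consec (rdelta J) (map pr rho).
Proof. unfold is_track. rewrite consec_map. simpl. tauto. Qed.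

Lemma hsat_atom (rho : list st) p : hsat K rho (HAtom p) <-> forall w, In w (map pr rho) -> rmu J w p.
Proof. simpl. split.
  - intros H w Hw. apply in_map_iff in Hw as [x [<- Hx]]. apply (H x Hx).
  - intros H x Hx. apply (H (pr x)), in_map; auto. Qed.

Lemma valid_in (rho : list st) w : In w (map pr rho) -> valid J w.
Proof. intros Hw. apply in_map_iff in Hw as [x [<- Hx]]. apply proj2_sig. Qed.

Definition From (g : hs ap) (x : rstate) : Prop :=
  exists rho' : list st, is_track K rho' /\ hd_error (map pr rho') = Some x /\ hsat K rho' g.

Lemma HA_from (rho : list st) g x : lst_opt (map pr rho) = Some x ->
  (hsat K rho (HA g) <-> From g x).
Proof.
  intros H. rewrite lst_opt_map in H. change (option_map pr (@lst_opt (stateK J) rho) = Some x) in H.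
  revert H. simpl. unfold From.
  destruct (lst_opt rho) as [a|]; simpl; intros H; [|discriminate]. inversion H; subst x.
  split; intros [r [H1 [H2 H3]]]; exists r; split; auto; split; auto.
  - destruct r as [|b r]; simpl in *; [discriminate| congruence].
  - destruct r as [|b r]; simpl in *; [discriminate|]. inversion H2. f_equal. apply pr_inj; congruence.
Qed.

Lemma hsat_BoxB (rho : list st) f : hsat K rho (HBoxB f) <-> forall i, 1 <= i < length rho -> hsat K (firstn i rho) f.
Proof. simpl. split.
  - intros H i Hi. apply NNPP. intros Hn. apply H. exists i. auto.
  - intros H [i [Hi Hn]]. apply Hn, H, Hi. Qed.

Lemma len_firstn_lt {A} (l : list A) i : i < length l -> length (firstn i l) = i.
Proof. intros; rewrite length_firstn; lia. Qed.

Lemma len2_iff (rho : list st) : hsat K rho len2 <-> length rho = 2.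
Proof. unfold len2. change (hsat K rho (HB HTop) /\ hsat K rho (HBoxB (HBoxB HBot)) <-> length rho = 2).
  rewrite hsat_BoxB. simpl. split.
  - intros [[i [Hi _]] H]. destruct (Nat.le_gt_cases (length rho) 2) as [|Hl]; [lia|].
    exfalso. apply (H 2 ltac:(lia)). exists 1.
    rewrite len_firstn_lt by lia. split; [lia|]. tauto.
  - intros Hl. split.
    + exists 1. split; [lia| exact I].
    + intros i Hi [j [Hj _]]. rewrite len_firstn_lt in Hj by lia. lia.
Qed.

Lemma hsat_bigAnd (rho : list st) (f : nat -> hs ap) l :
  hsat K rho (bigAnd (map f l)) <-> forall i, In i l -> hsat K rho (f i).
Proof. induction l as [|a l IH]; [simpl; split; tauto|].
  change (hsat K rho (f a) /\ hsat K rho (bigAnd (map f l)) <-> forall i, In i (a :: l) -> hsat K rho (f i)).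
  rewrite IH. split.
  - intros [H1 H2] i [<- | Hi]; auto.
  - intros H; split; [apply H; left; auto| intros i Hi; apply H; right; auto]. Qed.

Lemma hsat_bigOr (rho : list st) (f : nat -> hs ap) l :
  hsat K rho (bigOr (map f l)) <-> exists i, In i l /\ hsat K rho (f i).
Proof. induction l as [|a l IH]; [simpl; split; [tauto| intros [? [[] _]]]|].
  change (~ (~ hsat K rho (f a) /\ ~ hsat K rho (bigOr (map f l))) <-> exists i, In i (a :: l) /\ hsat K rho (f i)).
  rewrite IH. split.
  - intros H. apply NNPP; intros Hn. apply H. split.
    + intros Ha; apply Hn; exists a; simpl; auto.
    + intros [i [Hi Hf]]; apply Hn; exists i; simpl; auto.
  - intros [i [[<- | Hi] Hf]] [H1 H2]; auto. apply H2; exists i; auto. Qed.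

Definition atoms (l : list rstate) (v : pvar) : Prop :=
  match v with
  | X k => forall w, In w l -> rmu J w (AX k)
  | Zv i u => forall w, In w l -> rmu J w (AZ i u)
  end.

Lemma hsat_ptr (rho : list st) f : hsat K rho (ptr f) <-> peval (atoms (map pr rho)) f.
Proof. induction f as [v| | |f IH|f IH g IHg|f IH g IHg]; simpl.
  - destruct v; apply hsat_atom.
  - tauto.
  - tauto.
  - rewrite IH; tauto.
  - rewrite IH, IHg; tauto.
  - unfold HOr; simpl. rewrite IH, IHg. tauto.
Qed.

End Sec2.

Lemma lst_opt_ne {A} (l : list A) : l <> [] -> exists a, lst_opt l = Some a.
Proof. induction l as [|x [|y t] IH]; intros H; [congruence| exists x; reflexivity|].
  apply IH; discriminate. Qed.

Section Sec3.
Variable J : snsat.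
Variable Hwf : snsat_wf J.
Variable hn : 1 <= nI J.
Notation K := (KI J hn).
Notation st := (stateK J).
Notation pr := (@proj1_sig rstate (valid J)).

Definition phiE k := HAnd (HNot (HAtom As)) (HAnd len2 (HA (HAnd len2 (HNot (psi J k))))).
Definition Gi i := HImp (HAnd (HAtom (AX i)) (HNot (HAtom (AR i)))) (ptr (FI J i)).
Definition Bpart k := HBoxB (HImp (bigOr (map (fun i => HA (HAtom (APx i))) (seq 1 (nI J)))) (HA (phiE k))).
Definition phi k := HAnd (HAnd (HAtom As) (HNot (HAtom At))) (HAnd (bigAnd (map Gi (seq 1 (nI J)))) (Bpart k)).
Lemma psi_S k : psi J (S k) = HA (phi k).
Proof. reflexivity. Qed.

Definition Qk k := forall m, inrange J m -> m <= k -> forall rho : list st,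
  lst_opt (map pr rho) = Some (Wx m) -> (hsat K rho (psi J k) <-> vI J m).

Lemma APx_from (a : st) i : From J hn (HAtom (APx i)) (pr a) <-> pr a = Wxb i.
Proof. split.
  - intros [r [Ht [Hh Hs]]]. rewrite hsat_atom in Hs.
    destruct r as [|b r]; simpl in Hh; [discriminate|]. inversion Hh.
    apply (rmu_APx J). apply Hs. simpl. left; congruence.
  - intros H. exists [a]. split; [|split].
    + split; [discriminate| exact I].
    + reflexivity.
    + apply hsat_atom. intros w [<- | []]. apply rmu_APx; auto.
Qed.

Lemma edge_Wxb_Sb j j' : rdelta J (Wxb j) (Sb j') -> j' = j.
Proof. intros H.
  destruct H as [[i [_ [H1 H2]]] | [[i [_ [H1 _]]] | [[i [u [_ [_ [H1 H2]]]]] | [[i [_ [H0 [H1 H2]]]] | [[_ [H1 H2]] | [H1 _]]]]]];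
  try discriminate.
  - congruence.
  - apply inL_isx in H2; simpl in H2; tauto.
  - apply inL_isx in H2; simpl in H2; tauto.
Qed.

Lemma edge_Sb j w : rdelta J (Sb j) w -> w = Wx j.
Proof. intros H.
  destruct H as [[i [_ [H1 H2]]] | [[i [_ [H1 H2]]] | [[i [u [_ [_ [H1 H2]]]]] | [[i [_ [H0 [H1 H2]]]] | [[_ [H1 H2]] | [H1 _]]]]]];
  try discriminate.
  - congruence.
  - apply inL_isx in H1; simpl in H1; tauto.
  - apply inL_isx in H1; simpl in H1; tauto.
  - apply inL_isx in H1; simpl in H1; tauto.
Qed.

Lemma E_lemma k j (a : st) : Qk k -> j <= k -> inrange J j -> pr a = Wxb j ->
  (From J hn (phiE k) (pr a) <-> ~ vI J j).
Proof. intros Hq Hjk Hj Ha. split.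
  - intros [r [Ht [Hh Hs]]]. unfold phiE in Hs.
    destruct Hs as [Hns [Hl2 HA2]]. apply len2_iff in Hl2.
    destruct r as [|b [|c [|d r]]]; simpl in Hl2; try discriminate.
    simpl in Hh. inversion Hh as [Hb]. rewrite Ha in Hb.
    apply is_track_iff in Ht as [_ [He _]]. simpl in He. rewrite Hb in He.
    assert (Hc : exists j', pr c = Sb j').
    { apply NNPP; intros Hn. apply Hns. intros w [<- | [<- | []]].
      - change (rmu J (pr b) As). rewrite Hb. simpl. left; split; [exact I| discriminate].
      - change (rmu J (pr c) As). apply rmu_As. intros Hs. apply Hn. destruct (pr c); simpl in Hs; try tauto. eauto. }
    destruct Hc as [j' Hc]. rewrite Hc in He. apply edge_Wxb_Sb in He. subst j'.
    apply (HA_from J hn [b; c] _ (Sb j)) in HA2; [|simpl; rewrite Hc; reflexivity].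
    destruct HA2 as [r2 [Ht2 [Hh2 [Hl2' Hnp]]]]. apply len2_iff in Hl2'.
    destruct r2 as [|d [|e [|f r2]]]; simpl in Hl2'; try discriminate.
    simpl in Hh2. inversion Hh2 as [Hd].
    apply is_track_iff in Ht2 as [_ [He2 _]]. simpl in He2. rewrite Hd in He2.
    apply edge_Sb in He2.
    intros Hv. apply Hnp. apply (Hq j Hj Hjk). simpl. rewrite He2. reflexivity. auto.
  - intros Hv.
    set (c := exist (valid J) (Sb j) Hj : st).
    set (e := exist (valid J) (Wx j) Hj : st).
    exists [a; c]. split; [|split].
    + apply is_track_iff. split; [discriminate|]. simpl. split; [|exact I].
      rewrite Ha. left. exists j. auto.
    + reflexivity.
    + split; [|split].
      * intros Hs. apply (proj1 (rmu_As J (Sb j))). 2: exact I. apply (Hs c). simpl; auto.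
      * apply len2_iff; reflexivity.
      * exists [c; e]. split; [|split].
        -- apply is_track_iff. split; [discriminate|]. simpl. split; [|exact I].
           right; left. exists j. auto.
        -- reflexivity.
        -- split; [apply len2_iff; reflexivity|].
           intros Hp. apply Hv. apply (Hq j Hj Hjk [c; e]); auto.
Qed.

End Sec3.

Section Sec4.
Variable J : snsat.
Variable Hwf : snsat_wf J.
Variable hn : 1 <= nI J.
Notation K := (KI J hn).
Notation st := (stateK J).
Notation pr := (@proj1_sig rstate (valid J)).

Lemma Wxb_lt m (l : list rstate) j : consec (rdelta J) l -> hd_error l = Some (Wx m) ->
  (forall w, In w l -> ~ isSb w) -> In (Wxb j) l -> j < m.
Proof. intros Hc Hh Hs Hin. destruct l as [|w t]; [discriminate|]. simpl in Hh. inversion Hh; subst w.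
  destruct Hin as [Hin|Hin]; [discriminate|].
  destruct (xtail J _ _ Hc Hs _ Hin) as [_ H]. simpl in H. apply H. exact I. Qed.

Lemma B_lemma k m (rho : list st) : Qk J hn k -> m <= S k -> is_track K rho ->
  hd_error (map pr rho) = Some (Wx m) -> (forall w, In w (map pr rho) -> ~ isSb w) ->
  In S0 (map pr rho) ->
  (hsat K rho (Bpart J k) <-> forall j, In (Wxb j) (map pr rho) -> ~ vI J j).
Proof.
  intros Hq Hm Ht Hh Hs H0. pose proof Ht as Ht'. apply is_track_iff in Ht' as [Hne Hc].
  assert (Hj : forall j, In (Wxb j) (map pr rho) -> j <= k /\ inrange J j).
  { intros j Hin. split.
    - pose proof (Wxb_lt m _ j Hc Hh Hs Hin). lia.
    - exact (valid_in J rho _ Hin). }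
  unfold Bpart. rewrite hsat_BoxB. split.
  - intros H j Hin. destruct (Hj j Hin) as [Hjk Hjr].
    apply in_map_iff in Hin as [a [Ha Hain]].
    destruct (in_split a rho) as [r1 [r2 E]]; auto.
    assert (Hr2 : r2 <> []).
    { intros ->. subst rho. rewrite map_app in H0. simpl in H0. apply in_app_or in H0 as [H0|[H0|[]]].
      - apply in_split in H0 as [b1 [b2 E]]. rewrite map_app in Hc. rewrite E in Hc. simpl in Hc.
        rewrite <- app_assoc in Hc. simpl in Hc.
        assert (X1 := after_S0 J b1 (b2 ++ [pr a]) Hc (pr a)). rewrite Ha in X1.
        discriminate X1. apply in_or_app; simpl; auto.
      - rewrite Ha in H0; discriminate. }
    specialize (H (length r1 + 1)). 
    assert (Hf : firstn (length r1 + 1) rho = r1 ++ [a]).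
    { subst rho. rewrite firstn_app_2. reflexivity. }
    rewrite Hf in H.
    assert (Hl : lst_opt (map pr (r1 ++ [a])) = Some (Wxb j)).
    { rewrite map_app. simpl. rewrite lst_opt_snoc. rewrite Ha. reflexivity. }
    assert (Hlen : 1 <= length r1 + 1 < length rho).
    { subst rho. rewrite length_app. simpl. destruct r2; [congruence|]. simpl. lia. }
    specialize (H Hlen).
    intros Hv. apply H. split.
    + apply hsat_bigOr. exists j. split; [apply in_seq; unfold inrange in Hjr; lia|].
      apply (HA_from J hn _ _ _ Hl). rewrite <- Ha. apply APx_from. auto.
    + intros Hn'. change (hsat K (r1 ++ [a]) (HA (phiE J k))) in Hn'.
      apply (HA_from J hn _ _ _ Hl) in Hn'. rewrite <- Ha in Hn'. apply (E_lemma J hn k j a) in Hn'; auto.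
  - intros H i Hi. intros [Hor Hn]. apply Hn.
    apply hsat_bigOr in Hor as [j [Hjs Hor]].
    assert (Hne' : firstn i rho <> []).
    { destruct rho; [congruence|]. destruct i; [lia|]. discriminate. }
    destruct (lst_opt_ne _ Hne') as [a Ha].
    assert (Hl : lst_opt (map pr (firstn i rho)) = Some (pr a)).
    { rewrite lst_opt_map. change (option_map pr (@lst_opt st (firstn i rho)) = Some (pr a)).
      rewrite Ha. reflexivity. }
    apply (HA_from J hn _ _ _ Hl) in Hor. apply APx_from in Hor.
    assert (Hin : In (Wxb j) (map pr rho)).
    { rewrite <- Hor. apply in_map. apply (in_firstn i). apply lst_opt_in; auto. }
    destruct (Hj j Hin) as [Hjk Hjr].
    change (hsat K (firstn i rho) (HA (phiE J k))).
    apply (HA_from J hn _ _ _ Hl). apply (E_lemma J hn k j a); auto.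
Qed.

End Sec4.

Section Sec5.
Variable J : snsat.
Variable Hwf : snsat_wf J.
Variable hn : 1 <= nI J.
Notation K := (KI J hn).
Notation st := (stateK J).
Notation pr := (@proj1_sig rstate (valid J)).

Lemma Gi_iff (rho : list st) i : hsat K rho (Gi J i) <->
  ((forall w, In w (map pr rho) -> rmu J w (AX i)) -> ~ (forall w, In w (map pr rho) -> rmu J w (AR i)) ->
   peval (atoms J (map pr rho)) (FI J i)).
Proof. unfold Gi. split.
  - intros H H1 H2.
    change (~ ((hsat K rho (HAtom (AX i)) /\ ~ hsat K rho (HAtom (AR i))) /\ ~ hsat K rho (ptr (FI J i)))) in H.
    rewrite !hsat_atom, hsat_ptr in H. apply NNPP; intros H3. apply H; auto.
  - intros H.
    change (~ ((hsat K rho (HAtom (AX i)) /\ ~ hsat K rho (HAtom (AR i))) /\ ~ hsat K rho (ptr (FI J i)))).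
    rewrite !hsat_atom, hsat_ptr. intros [[H1 H2] H3]. apply H3, H; auto. Qed.

Lemma bigAnd_iff (rho : list st) : hsat K rho (bigAnd (map (Gi J) (seq 1 (nI J)))) <->
  forall i, inrange J i -> (forall w, In w (map pr rho) -> rmu J w (AX i)) ->
   ~ (forall w, In w (map pr rho) -> rmu J w (AR i)) -> peval (atoms J (map pr rho)) (FI J i).
Proof. rewrite hsat_bigAnd. split.
  - intros H i Hi. apply Gi_iff, H, in_seq. unfold inrange in Hi; lia.
  - intros H i Hi. apply Gi_iff, H. apply in_seq in Hi. unfold inrange; lia. Qed.

Lemma Tr l i (rho' : nat -> Prop) (z : nat -> nat -> bool) : l <> [] -> inrange J i ->
  (forall k, 1 <= k < i -> (rho' k <-> ~ In (Wxb k) l)) ->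
  (forall u, 1 <= u <= jI J i -> (z i u = true <-> ~ In (Wzb i u) l)) ->
  (peval (atoms J l) (FI J i) <->
   peval (fun v => match v with X k => rho' k | Zv a b => z a b = true end) (FI J i)).
Proof.
  intros Hne Hi Hx Hz. apply (peval_congr _ _ _ _ (Hwf i Hi)).
  intros [k|a b] Hv; simpl.
  - rewrite Hx by lia. split.
    + intros H Hin. apply (proj2 (proj1 (rmu_AX J _ _) (H _ Hin))). reflexivity.
    + intros H w Hw. apply rmu_AX. split; [unfold inrange in *; lia|]. intros ->; tauto.
  - destruct Hv as [-> Hv]. rewrite Hz by lia. split.
    + intros H Hin. apply (proj2 (proj1 (rmu_AZ J _ _ _) (H _ Hin))). reflexivity.
    + intros H w Hw. apply rmu_AZ. split; [split; auto|]. intros ->; tauto.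
Qed.

Definition zb (l : list rstate) (a b : nat) : bool :=
  if excluded_middle_informative (In (Wzb a b) l) then false else true.

Lemma get_vI l i : l <> [] -> inrange J i -> ~ In (Wxb i) l ->
  (forall k, 1 <= k < i -> (~ In (Wxb k) l <-> vI J k)) ->
  peval (atoms J l) (FI J i) -> vI J i.
Proof.
  intros Hne Hi Hx Hk Hp. destruct i as [|i']; [unfold inrange in Hi; lia|].
  apply vI_S. exists (zb l). apply (Tr l (S i') (vupto J i') (zb l) Hne Hi) in Hp; auto.
  - intros k Hk'. rewrite vupto_stable by lia. rewrite Hk by lia. tauto.
  - intros u _. unfold zb. destruct (excluded_middle_informative _); split; intros; try tauto; discriminate.
Qed.

Lemma Core_fwd k m : Qk J hn k -> inrange J m -> m <= S k -> From J hn (phi J k) (Wx m) -> vI J m.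
Proof.
  intros Hq Hm Hmk [rho [Ht [Hh Hphi]]].
  destruct Hphi as [[HAs HAt] [HG HB]].
  pose proof Ht as Ht'. apply is_track_iff in Ht' as [Hne Hc].
  rewrite bigAnd_iff in HG.
  assert (Hs : forall w, In w (map pr rho) -> ~ isSb w).
  { intros w Hw. apply (proj1 (rmu_As J w)).
    pose proof (proj1 (hsat_atom J hn rho As) HAs w Hw) as X; exact X. }
  assert (H0 : In S0 (map pr rho)).
  { apply NNPP; intros Hn. apply HAt. apply (proj2 (hsat_atom J hn rho At)).
    intros w Hw. apply rmu_At. intros ->; tauto. }
  rewrite (B_lemma J hn k m rho Hq Hmk Ht Hh Hs H0) in HB.
  destruct (map pr rho) as [|w t] eqn:El; [destruct H0|]. simpl in Hh. inversion Hh; subst w.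
  assert (Hlne : Wx m :: t <> []) by discriminate.
  assert (HF : forall i, inrange J i -> i <= m -> ~ In (Wxb i) (Wx m :: t) ->
            (exists w, In w (Wx m :: t) /\ lev w = i) ->
            (forall k', 1 <= k' < i -> (~ In (Wxb k') (Wx m :: t) <-> vI J k')) -> vI J i).
  { intros i Hi Him Hx [w [Hw Hlw]] Hk.
    apply (get_vI _ i Hlne Hi Hx Hk). apply HG; auto.
    - intros w' Hw'. apply rmu_AX. split; auto. intros ->; tauto.
    - intros Hr. destruct (proj1 (rmu_AR J w i) (Hr w Hw)) as [_ [-> | Hne2]]; [|tauto].
      simpl in Hlw. unfold inrange in Hi; lia. }
  assert (Hlow : forall N i, 1 <= i < N -> i < m -> (~ In (Wxb i) (Wx m :: t) <-> vI J i)).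
  { induction N as [|N IH]; intros i Hi Him; [lia|].
    destruct (Nat.eq_dec i N) as [->|Hne3]; [|apply IH; lia].
    destruct (classic (In (Wxb N) (Wx m :: t))) as [Hin|Hin].
    - split; [intros Hn; contradiction|]. intros Hv _. apply (HB N Hin Hv).
    - split; [|tauto]. intros _. apply HF; auto.
      + unfold inrange in *; lia.
      + lia.
      + destruct (passing J (Wx m) t S0 N) as [z [Hz1 [Hz2 Hz3]]]; auto.
        * simpl. lia.
        * simpl. lia.
        * exists z. simpl. auto.
      + intros k' Hk'. apply IH; lia. }
  apply HF; auto.
  - intros [Hin|Hin]; [discriminate|].
    destruct (xtail J _ _ Hc Hs _ Hin) as [_ Hlt]. simpl in Hlt. specialize (Hlt I). lia.
  - exists (Wx m). simpl; auto.
  - intros k' Hk'. apply (Hlow m); lia.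
Qed.

End Sec5.

Section Sec6.
Variable J : snsat.
Variable Hwf : snsat_wf J.
Variable hn : 1 <= nI J.
Notation K := (KI J hn).
Notation st := (stateK J).
Notation pr := (@proj1_sig rstate (valid J)).

Definition vIb i : bool := if excluded_middle_informative (vI J i) then true else false.
Definition zsel (i : nat) : nat -> nat -> bool :=
  epsilon (inhabits (fun _ _ => true))
    (fun z => peval (fun v => match v with X k => vupto J (pred i) k | Zv a b => z a b = true end) (FI J i)).
Definition xs i := if vIb i then Wx i else Wxb i.
Definition zst i u := if zsel i i u then Wz i u else Wzb i u.
Definition zs i := map (zst i) (seq 1 (jI J i)).
Fixpoint blocks (i : nat) : list rstate :=
  match i with 0 => [S0] | S i' => xs (S i') :: zs (S i') ++ blocks i' end.
Definition cl m' := Wx (S m') :: zs (S m') ++ blocks m'.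

Lemma in_zs w i : In w (zs i) <-> exists u, 1 <= u <= jI J i /\ w = zst i u.
Proof. unfold zs. rewrite in_map_iff. split.
  - intros [u [<- Hu]]. apply in_seq in Hu. exists u; split; auto; lia.
  - intros [u [Hu ->]]. exists u; split; auto. apply in_seq; lia. Qed.

Lemma in_blocks w i : In w (blocks i) <->
  w = S0 \/ exists a, 1 <= a <= i /\ (w = xs a \/ exists u, 1 <= u <= jI J a /\ w = zst a u).
Proof. induction i as [|i IH]; simpl.
  - split; [intros [<- | []]; auto|]. intros [-> | [a [Ha _]]]; auto; lia.
  - rewrite in_app_iff, in_zs, IH. split.
    + intros [<- | [[u [Hu ->]] | [-> | [a [Ha H]]]]]; auto.
      * right; exists (S i); split; [lia|]; auto.
      * right; exists (S i); split; [lia|]; eauto.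
      * right; exists a; split; [lia|]; auto.
    + intros [-> | [a [Ha [-> | [u [Hu ->]]]]]]; auto.
      * destruct (Nat.eq_dec a (S i)) as [->|Hne]; auto. right; right; right; exists a; split; [lia|]; auto.
      * destruct (Nat.eq_dec a (S i)) as [->|Hne]; eauto. right; right; right; exists a; split; [lia|]; eauto.
Qed.

Lemma in_cl w m' : In w (cl m') <->
  w = Wx (S m') \/ (exists u, 1 <= u <= jI J (S m') /\ w = zst (S m') u) \/ w = S0 \/
  exists a, 1 <= a <= m' /\ (w = xs a \/ exists u, 1 <= u <= jI J a /\ w = zst a u).
Proof. unfold cl. simpl. rewrite in_app_iff, in_zs, in_blocks. split; intros H; intuition auto. Qed.

Lemma xs_eq a w : xs a = w -> (w = Wx a /\ vI J a) \/ (w = Wxb a /\ ~ vI J a).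
Proof. unfold xs, vIb. destruct (excluded_middle_informative _); intros <-; auto. Qed.

Lemma zst_eq a u w : zst a u = w -> (w = Wz a u /\ zsel a a u = true) \/ (w = Wzb a u /\ zsel a a u = false).
Proof. unfold zst. destruct (zsel a a u); intros <-; auto. Qed.

Section M.
Variable m' : nat.
Hypothesis Hm : S m' <= nI J.

Lemma cl_valid w : In w (cl m') -> valid J w.
Proof. rewrite in_cl. unfold valid, inZ, inrange.
  intros [-> | [[u [Hu E]] | [-> | [a [Ha [E | [u [Hu E]]]]]]]]; try lia; auto.
  - symmetry in E; apply zst_eq in E as [[-> _]|[-> _]]; lia.
  - symmetry in E; apply xs_eq in E as [[-> _]|[-> _]]; lia.
  - symmetry in E; apply zst_eq in E as [[-> _]|[-> _]]; lia.
Qed.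

Lemma cl_noSb w : In w (cl m') -> ~ isSb w.
Proof. rewrite in_cl.
  intros [-> | [[u [Hu E]] | [-> | [a [Ha [E | [u [Hu E]]]]]]]]; simpl; auto.
  - symmetry in E; apply zst_eq in E as [[-> _]|[-> _]]; simpl; auto.
  - symmetry in E; apply xs_eq in E as [[-> _]|[-> _]]; simpl; auto.
  - symmetry in E; apply zst_eq in E as [[-> _]|[-> _]]; simpl; auto.
Qed.

Lemma cl_S0 : In S0 (cl m').
Proof. apply in_cl. auto. Qed.

Lemma cl_lev w : In w (cl m') -> lev w <= S m'.
Proof. rewrite in_cl.
  intros [-> | [[u [Hu E]] | [-> | [a [Ha [E | [u [Hu E]]]]]]]]; simpl; try lia.
  - symmetry in E; apply zst_eq in E as [[-> _]|[-> _]]; simpl; lia.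
  - symmetry in E; apply xs_eq in E as [[-> _]|[-> _]]; simpl; lia.
  - symmetry in E; apply zst_eq in E as [[-> _]|[-> _]]; simpl; lia.
Qed.

Lemma cl_Wxb k : In (Wxb k) (cl m') -> 1 <= k <= m' /\ ~ vI J k.
Proof. rewrite in_cl.
  intros [E | [[u [Hu E]] | [E | [a [Ha [E | [u [Hu E]]]]]]]]; try discriminate.
  - symmetry in E; apply zst_eq in E as [[E _]|[E _]]; discriminate.
  - symmetry in E; apply xs_eq in E as [[E _]|[E H]]; [discriminate|]. inversion E; subst; auto.
  - symmetry in E; apply zst_eq in E as [[E _]|[E _]]; discriminate.
Qed.

Lemma cl_Wxb2 k : 1 <= k <= m' -> ~ vI J k -> In (Wxb k) (cl m').
Proof. intros Hk Hv. apply in_cl. right; right; right. exists k. split; auto. left.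
  unfold xs, vIb. destruct (excluded_middle_informative _); tauto. Qed.

Lemma cl_Wzb i u : In (Wzb i u) (cl m') <-> 1 <= i <= S m' /\ 1 <= u <= jI J i /\ zsel i i u = false.
Proof. rewrite in_cl. split.
  - intros [E | [[u' [Hu E]] | [E | [a [Ha [E | [u' [Hu E]]]]]]]]; try discriminate.
    + symmetry in E; apply zst_eq in E as [[E _]|[E H]]; [discriminate|]. inversion E; subst. split; [lia|auto].
    + symmetry in E; apply xs_eq in E as [[E _]|[E H]]; discriminate.
    + symmetry in E; apply zst_eq in E as [[E _]|[E H]]; [discriminate|]. inversion E; subst. split; [lia|auto].
  - intros [Hi [Hu Hz]].
    assert (Ez : zst i u = Wzb i u) by (unfold zst; rewrite Hz; reflexivity).
    destruct (Nat.eq_dec i (S m')) as [->|Hne].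
    + right; left. exists u; auto.
    + right; right; right. exists i. split; [lia|]. right. exists u; auto.
Qed.

End M.

Lemma zst_inL i u : 1 <= u -> inL i u (zst i u).
Proof. intros Hu. destruct u; [lia|]. unfold zst. simpl. destruct (zsel i i (S u)); auto. Qed.

Lemma chain i c : inrange J i -> forall u w rest, inL i u w -> u + c = jI J i ->
  (forall w', inL i (jI J i) w' -> consec (rdelta J) (w' :: rest)) ->
  consec (rdelta J) (w :: map (zst i) (seq (S u) c) ++ rest).
Proof. intros Hi. induction c as [|c IH]; intros u w rest Hw Hu Hr.
  - simpl. apply Hr. rewrite <- Hu. replace (u + 0) with u by lia. auto.
  - simpl. split.
    + right; right; left. exists i, u. split; [exact Hi|]. split; [lia|]. split; [exact Hw| apply zst_inL; lia].
    + apply IH; [apply zst_inL; lia| lia| exact Hr].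
Qed.

Lemma blocks_consec i' : S i' <= nI J -> forall w, inL (S i') 0 w -> consec (rdelta J) (w :: zs (S i') ++ blocks i').
Proof. induction i' as [|i'' IH]; intros Hle w Hw; unfold zs;
  apply (chain (S _) (jI J (S _))); auto; try (unfold inrange; lia).
  - intros w' Hw'. simpl. split; auto. right; right; right; right; left. split; auto. unfold inrange; lia.
  - intros w' Hw'. simpl blocks. simpl. split.
    + right; right; right; left. exists (S (S i'')). split; [unfold inrange; lia|]. split; [lia|]. split; auto.
      simpl. unfold xs. destruct (vIb _); auto.
    + apply IH; [lia|]. simpl. unfold xs. destruct (vIb _); auto.
Qed.

Lemma cl_consec m' : S m' <= nI J -> consec (rdelta J) (cl m').
Proof. intros H. apply blocks_consec; auto. simpl; auto. Qed.

End Sec6.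

Section Sec7.
Variable J : snsat.
Variable Hwf : snsat_wf J.
Variable hn : 1 <= nI J.
Notation K := (KI J hn).
Notation st := (stateK J).
Notation pr := (@proj1_sig rstate (valid J)).

Definition lift (w : rstate) : st :=
  match excluded_middle_informative (valid J w) with
  | left h => exist _ w h
  | right _ => exist (valid J) S0 Logic.I
  end.

Lemma map_lift l : (forall w, In w l -> valid J w) -> map pr (map lift l) = l.
Proof. induction l as [|w l IH]; intros H; simpl; auto.
  unfold lift at 1. destruct (excluded_middle_informative _) as [h|h].
  - simpl. f_equal. apply IH. intros; apply H; simpl; auto.
  - exfalso; apply h, H; simpl; auto. Qed.

Lemma zsel_spec i' : sat_with (FI J (S i')) (vupto J i') ->
  peval (fun v => match v with X k => vupto J i' k | Zv a b => zsel J (S i') a b = true end) (FI J (S i')).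
Proof. intros H. unfold zsel.
  apply (epsilon_spec (inhabits (fun _ _ : nat => true))
    (fun z : nat -> nat -> bool => peval (fun v => match v with X k => vupto J i' k | Zv a b => z a b = true end) (FI J (S i')))).
  exact H. Qed.

Lemma Core_bwd k m : Qk J hn k -> inrange J m -> m <= S k -> vI J m -> From J hn (phi J k) (Wx m).
Proof.
  intros Hq Hm Hmk Hv.
  destruct m as [|m']; [unfold inrange in Hm; lia|].
  assert (Hle : S m' <= nI J) by (unfold inrange in Hm; lia).
  set (rho := map lift (cl J m')).
  assert (Emap : map pr rho = cl J m') by (apply map_lift; apply cl_valid; auto).
  assert (Ht : is_track K rho).
  { apply is_track_iff. rewrite Emap. split; [|apply cl_consec; auto]. unfold rho, cl. discriminate. }
  assert (Hh : hd_error (map pr rho) = Some (Wx (S m'))) by (rewrite Emap; reflexivity).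
  assert (Hs : forall w, In w (map pr rho) -> ~ isSb w).
  { rewrite Emap. intros w Hw. exact (cl_noSb J hn m' w Hw). }
  assert (H0 : In S0 (map pr rho)) by (rewrite Emap; exact (cl_S0 J hn m')).
  exists rho. split; [exact Ht|]. split; [exact Hh|].
  split; [split|split].
  - apply (proj2 (hsat_atom J hn rho As)). intros w Hw. apply rmu_As. auto.
  - intros H. pose proof (proj1 (hsat_atom J hn rho At) H S0 H0) as X. apply rmu_At in X. auto.
  - apply bigAnd_iff. rewrite Emap. intros i Hi HAX HAR.
    assert (Hx : ~ In (Wxb i) (cl J m')).
    { intros Hin. apply (proj2 (proj1 (rmu_AX J _ _) (HAX _ Hin))). reflexivity. }
    assert (Hw : exists w, In w (cl J m') /\ lev w = i).
    { apply NNPP; intros Hn. apply HAR. intros w Hw. apply rmu_AR. split; auto.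
      right. intros E. apply Hn. eauto. }
    destruct Hw as [w [Hw Hlw]].
    assert (Him : i <= S m') by (rewrite <- Hlw; apply (cl_lev J hn m' Hle); auto).
    assert (Hvi : vI J i).
    { destruct (Nat.eq_dec i (S m')) as [->|Hne]; auto.
      apply NNPP; intros Hn. apply Hx. apply cl_Wxb2; auto. unfold inrange in Hi; lia. }
    destruct i as [|i']; [unfold inrange in Hi; lia|].
    apply vI_S in Hvi. apply zsel_spec in Hvi.
    apply (Tr J Hwf hn (cl J m') (S i') (vupto J i') (zsel J (S i'))); auto.
    + unfold cl; discriminate.
    + intros k' Hk'. rewrite vupto_stable by lia. split.
      * intros Hv' Hin. apply (cl_Wxb J hn m') in Hin. tauto.
      * intros Hn. apply NNPP; intros Hn'. apply Hn. apply cl_Wxb2; auto. lia.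
    + intros u Hu. rewrite (cl_Wzb J hn m' Hle). split.
      * intros Hz [_ [_ Hz']]. congruence.
      * intros Hn. destruct (zsel J (S i') (S i') u) eqn:Ez; auto. exfalso; apply Hn. split; [lia|auto].
  - rewrite (B_lemma J hn k (S m') rho Hq Hmk Ht Hh Hs H0). rewrite Emap.
    intros j Hin. apply (cl_Wxb J hn m') in Hin. tauto.
Qed.

Lemma Qall k : Qk J hn k.
Proof. induction k as [|k IH].
  - intros m Hm Hle. unfold inrange in Hm; lia.
  - intros m Hm Hle rho Hl. rewrite psi_S. rewrite (HA_from J hn rho _ _ Hl). split.
    + apply (Core_fwd J Hwf hn k m); auto.
    + apply (Core_bwd k m); auto.
Qed.

End Sec7.

Theorem mainTheorem6 (I : snsat) (Hwf : snsat_wf I) (hn : 1 <= nI I) :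
  vI I (nI I) <->
  kmodels (KI I hn) (HImp (HBoxB HBot) (psi I (nI I))).
Proof.
  assert (Hq := Qall I Hwf hn (nI I)).
  assert (Hrange : inrange I (nI I)) by (unfold inrange; lia).
  split.
  - intros Hv rho Htr Hhd. intros [Hb Hnp]. apply Hnp.
    rewrite hsat_BoxB in Hb.
    destruct rho as [|a [|b r]]; [discriminate| |].
    + simpl in Hhd. inversion Hhd; subst a.
      apply (Hq (nI I) Hrange (le_n _) [Kw0 (KI I hn)]); auto.
    + exfalso. apply (Hb 1). simpl; lia.
  - intros Hm.
    assert (Htr : is_track (KI I hn) [Kw0 (KI I hn)]) by (split; [discriminate| exact Logic.I]).
    specialize (Hm [Kw0 (KI I hn)] Htr eq_refl).
    apply NNPP. intros Hnv. apply Hm. split.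
    + apply hsat_BoxB. intros i Hi. simpl in Hi. lia.
    + intros Hp. apply Hnv. apply (Hq (nI I) Hrange (le_n _) [Kw0 (KI I hn)]); auto.
Qed.
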